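(* Let $\mathcal{A}$ be an $N$-dimensional real associative unital algebra generated by $\varepsilon$, i.e. every $z\in\mathcal{A}$ has the form $z=x_1+x_2\varepsilon+\cdots+x_N\varepsilon^{N-1}$ with $x_1,\dots,x_N\in\mathbb{R}$. Then there exist unique functions $f_1,\dots,f_N:\mathbb{R}\to\mathbb{R}$ such that $e^{\varepsilon t}=f_1(t)+\varepsilon f_2(t)+\cdots+\varepsilon^{N-1}f_N(t)$ for all $t\in\mathbb{R}$. Moreover, for each $i$ there exist real constants $c_{ij}$ with $f_i(t)=\sum_{j=0}^\infty c_{ij}t^j$ for all $t\in\mathbb{R}$ (so each $f_i$ is entire on $\mathbb{R}$), and each $f_i$ extends uniquely to an entire function on $\mathcal{A}$, namely $f_i(z)=\sum_{j=0}^\infty c_{ij}z^j$ for $z\in\mathcal{A}$.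
   Context: The exponential on $\mathcal{A}$ is $e^z=\sum_{n\ge0}z^n/n!$. A function $g:\mathcal{A}\to\mathcal{A}$ is entire if it can be written as a power series $\sum_n b_n z^n$ with $b_n\in\mathcal{A}$ converging for all $z\in\mathcal{A}$. $\mathbb{R}$ is identified with $\mathbb{R}\cdot 1\subseteq\mathcal{A}$; an extension of a real function $f$ is a function on $\mathcal{A}$ whose restriction to $\mathbb{R}$ is $f$. Convergence in $\mathcal{A}$ is with respect to any norm on the finite-dimensional space $\mathcal{A}$. *)

(* Defs.v *)
(* a finite-dimensional real algebra is an [falgType R]
   over an abstract [R : realType]; convergence of sequences in the algebra is
   taken with respect to coordinates in a basis (sup-norm of coordinates). *)
From HB Require Import structures.
From mathcomp Require Import all_boot all_order all_algebra.
From mathcomp Require Import falgebra.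
From mathcomp Require Import all_classical all_reals all_analysis.
Set Implicit Arguments. Unset Strict Implicit. Unset Printing Implicit Defensive.
Import Order.TTheory GRing.Theory Num.Theory.
Import numFieldNormedType.Exports.
Local Open Scope classical_set_scope.
Local Open Scope ring_scope.

(* Convergence of a sequence in a finite-dimensional algebra A:
   every coordinate in the canonical basis [vbasis {:A}] converges.
   (All norms on a finite-dimensional space are equivalent, so this is
   convergence with respect to any norm.) *)
Definition Acvg (R : realType) (A : falgType R) (u : nat -> A) (l : A) : Prop :=
  forall i : 'I_(\dim (fullv : {vspace A})),
    (fun n => (coord (vbasis (fullv : {vspace A})) i (u n) : R)) @ \oo -->
      (coord (vbasis (fullv : {vspace A})) i l : R).

Definition Asums (R : realType) (A : falgType R) (a : nat -> A) (s : A) : Prop :=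
  Acvg (fun n => \sum_(0 <= k < n) a k) s.

Definition Rsums (R : realType) (a : nat -> R) (s : R) : Prop :=
  (fun n => \sum_(0 <= k < n) a k) @ \oo --> s.

Definition Aexp_eq (R : realType) (A : falgType R) (z s : A) : Prop :=
  Asums (fun n => (n`!%:R)^-1 *: z ^+ n) s.

Definition Aentire_with (R : realType) (A : falgType R) (b : nat -> A) (g : A -> A) : Prop :=
  forall z : A, Asums (fun n => b n * z ^+ n) (g z).

(* Main.v *)
Require Import Defs.
From HB Require Import structures.
From mathcomp Require Import all_boot all_order all_algebra.
From mathcomp Require Import falgebra.
From mathcomp Require Import all_classical all_reals all_analysis.
From mathcomp Require Import ring lra.
Import Order.TTheory GRing.Theory Num.Theory.
Import numFieldNormedType.Exports.
Local Open Scope ring_scope.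
Lemma coordZ (R : realType) (A : falgType R) (m : nat) (Y : m.-tuple A) (j : 'I_m)
  (a : R) (v : A) : coord Y j (a *: v) = a * coord Y j v.
Proof. by rewrite linearZ. Qed.

Lemma coord_sum (R : realType) (A : falgType R) (m : nat) (Y : m.-tuple A) (j : 'I_m)
  (I : Type) (r : seq I) (F : I -> A) :
  coord Y j (\sum_(i <- r) F i) = \sum_(i <- r) coord Y j (F i).
Proof. by rewrite linear_sum. Qed.

Lemma exp_bound_cvg (R : realType) (a : nat -> R) (C K : R) : 0 <= K ->
  (forall p, `|a p| <= C * (K ^+ p / p`!%:R)) -> cvgn (series a).
Proof.
move=> K0 H.
have C0 : 0 <= C.
  by have := H 0%N; rewrite expr0 fact0 divr1 mulr1; apply: le_trans.
apply: normed_cvg.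
apply: (@series_le_cvg _ _ (fun p => C * exp_coeff K p)).
- by move=> p; rewrite /=.
- by move=> p; rewrite mulr_ge0 // exp_coeff_ge0.
- by move=> p; exact: H.
have -> : series (fun p => C * exp_coeff K p) = (fun=> C) \* series (exp_coeff K).
  by apply/funext => p; rewrite /series /= mulr_sumr.
apply: is_cvgM; first exact: is_cvg_cst.
exact: is_cvg_series_exp_coeff.
Qed.
Section Gen.
Variables (R : realType) (A : falgType R).
Local Open Scope classical_set_scope.
Local Notation n := (\dim (fullv : {vspace A})).
Local Notation B := (vbasis (fullv : {vspace A})).
Definition cB (k : 'I_n) (z : A) : R := coord B k z.

Lemma cvg_sumR (I : Type) (r : seq I) (F : I -> nat -> R) (l : I -> R) :
  (forall i, F i @ \oo --> l i) ->
  (fun m => \sum_(i <- r) F i m) @ \oo --> \sum_(i <- r) l i.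
Proof.
move=> H; elim: r => [|a r IH].
  have -> : (fun m => \sum_(i <- [::]) F i m) = (fun=> 0).
    by apply/funext => m; rewrite big_nil.
  rewrite big_nil; exact: cvg_cst.
have -> : (fun m => \sum_(i <- a :: r) F i m) =
   (F a + (fun m => \sum_(i <- r) F i m)).
  by apply/funext => m; rewrite big_cons.
rewrite big_cons; exact: cvgD.
Qed.

Lemma coord_expand (m : nat) (Y : m.-tuple A) j z :
  coord Y j z = \sum_k cB k z * coord Y j B`_k.
Proof.
rewrite {1}(coord_vbasis (memvf z)) linear_sum; apply: eq_bigr => k _.
by rewrite linearZ.
Qed.

Lemma Acvg_coord (m : nat) (Y : m.-tuple A) j (u : nat -> A) (l : A) :
  Acvg u l -> (fun p => coord Y j (u p)) @ \oo --> coord Y j l.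
Proof.
move=> H; rewrite coord_expand.
have -> : (fun p => coord Y j (u p)) =
   (fun p => \sum_k cB k (u p) * coord Y j B`_k).
  by apply/funext => p; rewrite coord_expand.
apply: cvg_sumR => k; apply: cvgM; [exact: H | exact: cvg_cst].
Qed.

Lemma Acvg_unique (u : nat -> A) (l l' : A) : Acvg u l -> Acvg u l' -> l = l'.
Proof.
move=> H1 H2; rewrite (coord_vbasis (memvf l)) (coord_vbasis (memvf l')).
apply: eq_bigr => k _; congr (_ *: _).
exact: (cvg_unique _ (H1 k) (H2 k)).
Qed.

Definition Alim (u : nat -> A) : A :=
  \sum_k (lim (cB k (u p) @[p --> \oo])) *: B`_k.

Lemma Acvg_Alim (u : nat -> A) : (forall k, cvgn (fun p => cB k (u p))) -> Acvg u (Alim u).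
Proof.
move=> H k; by rewrite /Alim coord_sum_free ?(basis_free (vbasisP _)).
Qed.

Lemma Asums_Alim (a : nat -> A) :
  (forall k, cvgn (series (fun p => cB k (a p)))) ->
  Asums a (Alim (fun p => \sum_(0 <= i < p) a i)).
Proof.
move=> H; apply: Acvg_Alim => k.
have -> : (fun p => cB k (\sum_(0 <= i < p) a i)) = series (fun p => cB k (a p)).
  by apply/funext => p; rewrite /cB linear_sum.
exact: H.
Qed.

Definition nrm (z : A) : R := \sum_k `|cB k z|.

Lemma nrm_ge0 z : 0 <= nrm z.
Proof. by apply: sumr_ge0 => k _. Qed.

Lemma cB_le k z : `|cB k z| <= nrm z.
Proof.
rewrite /nrm (bigD1 k) //= lerDl; by apply: sumr_ge0 => i _.
Qed.

Lemma nrmZ a z : nrm (a *: z) = `|a| * nrm z.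
Proof.
rewrite /nrm mulr_sumr; apply: eq_bigr => k _.
by rewrite /cB linearZ /= normrM.
Qed.

Lemma nrmD z w : nrm (z + w) <= nrm z + nrm w.
Proof.
rewrite /nrm -big_split /=; apply: ler_sum => k _.
by rewrite /cB linearD /= ler_normD.
Qed.

Lemma nrm_sum (I : Type) (r : seq I) (F : I -> A) :
  nrm (\sum_(i <- r) F i) <= \sum_(i <- r) nrm (F i).
Proof.
elim: r => [|a r IH].
  rewrite !big_nil /nrm; rewrite big1 // => k _.
  by rewrite /cB linear0 normr0.
rewrite !big_cons; apply: le_trans (nrmD _ _) _; exact: lerD.
Qed.

Lemma coord_bound (m : nat) (Y : m.-tuple A) j z :
  `|coord Y j z| <= (\sum_(k < n) `|coord Y j B`_k|) * nrm z.
Proof.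
rewrite coord_expand; apply: le_trans (ler_norm_sum _ _ _) _.
rewrite mulr_suml; apply: ler_sum => k _.
by rewrite normrM mulrC ler_wpM2l // cB_le.
Qed.

Definition Mc : R := \sum_(k < n) \sum_(l < n) nrm (B`_k * B`_l).

Lemma Mc_ge0 : 0 <= Mc.
Proof. by apply: sumr_ge0 => k _; apply: sumr_ge0 => l _; apply: nrm_ge0. Qed.

Lemma nrmM z w : nrm (z * w) <= Mc * nrm z * nrm w.
Proof.
rewrite {1}(coord_vbasis (memvf z)) {1}(coord_vbasis (memvf w)) mulr_suml.
apply: le_trans; first exact: nrm_sum.
rewrite /Mc mulr_suml mulr_suml; apply: ler_sum => k _.
rewrite mulr_sumr; apply: le_trans; first exact: nrm_sum.
rewrite mulr_suml mulr_suml; apply: ler_sum => l _.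
rewrite -scalerAl -scalerAr scalerA nrmZ normrM.
have ha := cB_le k z; have hb := cB_le l w.
have a0 := normr_ge0 (cB k z); have b0 := normr_ge0 (cB l w).
have c0 := nrm_ge0 (B`_k * B`_l).
move: ha hb a0 b0 c0; rewrite /cB.
set c := nrm (B`_k * B`_l); set X := nrm z; set Y := nrm w.
set a := `|coord _ k z|; set b := `|coord _ l w|.
move=> ha hb a0 b0 c0.
have h1 : a * b <= X * Y by apply: ler_pM.
apply: le_trans (ler_wpM2r c0 h1) _.
by rewrite le_eqVlt; apply/orP; left; apply/eqP; ring.
Qed.

Lemma nrmX z p : nrm (z ^+ p) <= nrm 1 * (Mc * nrm z) ^+ p.
Proof.
elim: p => [|p IH]; first by rewrite expr0 expr0 mulr1.
rewrite exprSr; apply: le_trans (nrmM _ _) _.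
apply: le_trans (ler_wpM2r (nrm_ge0 z) (ler_wpM2l Mc_ge0 IH)) _.
by rewrite exprSr le_eqVlt; apply/orP; left; apply/eqP; ring.
Qed.

Lemma coordX_bound (m : nat) (Y : m.-tuple A) j z :
  exists C K, [/\ 0 <= C, 0 <= K & forall p, `|coord Y j (z ^+ p)| <= C * K ^+ p].
Proof.
exists ((\sum_(k < n) `|coord Y j B`_k|) * nrm 1), (Mc * nrm z); split.
- by rewrite mulr_ge0 ?nrm_ge0 // sumr_ge0.
- by rewrite mulr_ge0 ?nrm_ge0 ?Mc_ge0.
move=> p; apply: le_trans; first exact: coord_bound.
rewrite -mulrA ler_wpM2l ?sumr_ge0 //; exact: nrmX.
Qed.

Lemma coordB_eq (x y : A) : (forall k, cB k x = cB k y) -> x = y.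
Proof.
move=> H; rewrite (coord_vbasis (memvf x)) (coord_vbasis (memvf y)).
by apply: eq_bigr => k _; rewrite -!/(cB _ _) H.
Qed.

Lemma cB_alg k (a : R) : cB k (a%:A : A) = a * cB k 1.
Proof. by rewrite /cB linearZ. Qed.

Lemma algX (a : R) m : (a%:A : A) ^+ m = (a ^+ m)%:A.
Proof.
elim: m => [|m IH]; first by rewrite !expr0 scale1r.
by rewrite !exprS IH mulr_algl scalerA.
Qed.

Lemma expcvg (w : A) k :
  cvgn (series (fun p => cB k ((p`!%:R)^-1 *: w ^+ p))).
Proof.
have [C [K [C0 K0 HCK]]] := coordX_bound _ B k w.
apply: (@exp_bound_cvg _ _ C K K0) => p.
rewrite /cB linearZ /= normrM ger0_norm ?invr_ge0 ?ler0n // mulrC.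
rewrite mulrA ler_wpM2r ?invr_ge0 ?ler0n //; exact: HCK.
Qed.

Lemma entire_cvg (c : nat -> R) (C1 K1 : R) : 0 <= K1 ->
  (forall m, `|c m| <= C1 * (K1 ^+ m / m`!%:R)) ->
  forall (z : A) k, cvgn (series (fun m => cB k ((c m)%:A * z ^+ m))).
Proof.
move=> K10 Hc z k.
have C10 : 0 <= C1.
  by have := Hc 0%N; rewrite expr0 fact0 divr1 mulr1; apply: le_trans.
have [C2 [K2 [C20 K20 H2]]] := coordX_bound _ B k z.
apply: (@exp_bound_cvg _ _ (C1 * C2) (K1 * K2)); first by rewrite mulr_ge0.
move=> m; rewrite mulr_algl /cB linearZ /= normrM.
apply: le_trans (ler_pM (normr_ge0 _) (normr_ge0 _) (Hc m) (H2 m)) _.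
by rewrite exprMn le_eqVlt; apply/orP; left; apply/eqP; ring.
Qed.


End Gen.


Lemma geo_sum (R : realType) (K : nat) :
  \sum_(i < K) ((2:R) ^+ i.+1)^-1 = 1 - ((2:R) ^+ K)^-1.
Proof.
elim: K => [|K IH]; first by rewrite big_ord0 expr0 invr1 subrr.
rewrite big_ord_recr /= IH exprS.
have h : (2:R) ^+ K != 0 by rewrite expf_neq0 // pnatr_eq0.
by field.
Qed.

Lemma series_id0 (R : realType) (d : nat -> R) :
  (forall t : R, series (fun p => d p * t ^+ p) @ \oo --> 0)%classic ->
  forall p, d p = 0.
Proof.
move=> H.
have [M0 HM0] : exists M, forall j, `|d j * 2 ^+ j| <= M.
  have hb := cvg_series_bounded (cvgP _ (H 2)).
  have PF : ProperFilter (globally [set: nat]).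
    exact: (@globally_properfilter nat [set: nat] 0%N).
  case/ex_bound: hb => M HM; exists M => j; exact: HM.
pose M := Num.max M0 1.
have M1 : 1 <= M by rewrite le_max lexx orbT.
have HM : forall j, `|d j| * 2 ^+ j <= M.
  move=> j; have := HM0 j; rewrite normrM normrX (@ger0_norm _ 2) // => h.
  by apply: le_trans h _; rewrite le_max lexx.
elim/ltn_ind => p IH.
apply/eqP; apply/negP => /negP dp0.
pose e := `|d p|.
have e0 : 0 < e by rewrite normr_gt0.
pose t := e / (4 * M + e).
have Hden : 0 < 4 * M + e by lra.
have t0 : 0 < t by rewrite divr_gt0.
have tE : t * (4 * M + e) = e by rewrite /t divfK // gt_eqF.
have t1 : t <= 1 by nra.
have t4 : 4 * M * t <= e by nra.
pose u := t ^+ p.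
have u0 : 0 < u by rewrite exprn_gt0.
have Mge0 : 0 <= M by lra.
have Mut0 : 0 <= M * u * t.
  by apply: mulr_ge0; [apply: mulr_ge0|]; [done|exact: ltW|exact: ltW].
have ue0 : 0 < u * e / 2 by rewrite divr_gt0 // mulr_gt0.
have [N0 _ HN0] := cvgr0_norm_lt _ (H t) _ ue0.
have := HN0 (p + N0.+1)%N (ltnW (leq_addl p N0.+1)).
rewrite /series /=.
rewrite (@big_cat_nat _ _ _ p) ?leq_addr //=.
rewrite big1_seq ?add0r; last first.
  move=> j /andP[_]; rewrite mem_index_iota => /andP[_ jp].
  by rewrite IH // mul0r.
rewrite -{1}[p]add0n big_addn addKn big_mkord big_ord_recl /= add0n.
set T := \sum_(i < N0) _.
have hT : `|T| <= M * u * t.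
  apply: le_trans; first exact: ler_norm_sum.
  apply: (@le_trans _ _ (\sum_(i < N0) M * u * t * ((2:R) ^+ i.+1)^-1)).
    apply: ler_sum => i _.
    have -> : bump 0 i = i.+1 by rewrite /bump leq0n add1n.
    set j := (i.+1 + p)%N.
    rewrite normrM normrX (ger0_norm (ltW t0)).
    have hd : `|d j| <= M / 2 ^+ j by rewrite ler_pdivlMr ?exprn_gt0.
    have ht : t ^+ j <= u * t.
      rewrite /j exprD mulrC /u ler_wpM2l ?exprn_ge0 ?(ltW t0) //.
      by rewrite exprS ler_piMr ?(ltW t0) // exprn_ile1 // ltW.
    apply: le_trans (ler_pM (normr_ge0 _) (exprn_ge0 _ (ltW t0)) hd ht) _.
    have h2 : (2:R) ^+ j != 0 by rewrite expf_neq0 // pnatr_eq0.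
    have -> : M / 2 ^+ j * (u * t) = M * u * t * (2 ^+ j)^-1 by field.
    rewrite ler_wpM2l //.
    rewrite lef_pV2 ?posrE ?exprn_gt0 //.
    by apply: ler_weXn2l; [lra | rewrite /j; apply: leq_addr].
  rewrite -mulr_sumr geo_sum ler_piMr //.
have hS := lerB_normD (d p * t ^+ p) T.
rewrite normrM normrX (ger0_norm (ltW t0)) -/e -/u in hS.
move=> hlt.
have h4 := ler_wpM2r (ltW u0) t4.
have eu0 : 0 < e * u by rewrite mulr_gt0.
nra.
Qed.

Arguments cB {R A}. Arguments Alim {R A}. Arguments Acvg_coord {R A m}.
Arguments Acvg_unique {R A}. Arguments Asums_Alim {R A}.
Arguments coordB_eq {R A}. Arguments cB_alg {R A}. Arguments algX {R A}.
Arguments expcvg {R A}. Arguments entire_cvg {R A}.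
Arguments coordX_bound {R A m}.

Theorem theorem7p3 (R : realType) (A : falgType R) (N : nat) (eps : A)
  (hdim : \dim (fullv : {vspace A}) = N)
  (hgen : forall z : A, exists x : 'I_N -> R, z = \sum_(i < N) x i *: eps ^+ i) :
  exists f : 'I_N -> R -> R,
    [/\ (forall t : R, Aexp_eq (t *: eps) (\sum_(i < N) f i t *: eps ^+ i)),
        (forall g : 'I_N -> R -> R,
           (forall t : R, Aexp_eq (t *: eps) (\sum_(i < N) g i t *: eps ^+ i)) ->
           forall i t, g i t = f i t)
      & forall i : 'I_N, exists c : nat -> R,
          (forall t : R, Rsums (fun j => c j * t ^+ j) (f i t)) /\
          exists F : A -> A,
            [/\ Aentire_with (fun j => (c j)%:A) F,
                (forall t : R, F (t%:A) = (f i t)%:A)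
              & forall (b : nat -> A) (g : A -> A),
                  Aentire_with b g ->
                  (forall t : R, g (t%:A) = (f i t)%:A) ->
                  forall z : A, g z = F z]].
Proof.
pose X : N.-tuple A := [tuple eps ^+ i | i < N].
have XE : forall i : 'I_N, X`_i = eps ^+ i.
  by move=> i; rewrite -tnth_nth tnth_mktuple.
have spanX : forall z, z \in <<X>>%VS.
  move=> z; have [x ->] := hgen z; apply: memv_suml => i _; apply: memvZ.
  by rewrite -XE; apply: memv_span; apply: mem_nth; rewrite size_tuple.
have freeX : free X.
  rewrite /free.
  have -> : <<X>>%VS = fullv.
    by apply/eqP; rewrite eqEsubv subvf /=; apply/subvP => z _; exact: spanX.
  by rewrite size_tuple hdim.
have eqL : forall z, \sum_(i < N) coord X i z *: eps ^+ i = z.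
  by move=> z; rewrite {2}(coord_span (spanX z)); apply: eq_bigr => i _; rewrite XE.
have coordS : forall (x : 'I_N -> R) j, coord X j (\sum_(i < N) x i *: eps ^+ i) = x j.
  move=> x j; rewrite -(coord_sum_free x j freeX); congr (coord X j _).
  by apply: eq_bigr => i _; rewrite XE.
pose L (w : A) := Alim (fun p => \sum_(0 <= m < p) (m`!%:R)^-1 *: w ^+ m).
have HL : forall w, Aexp_eq w (L w).
  by move=> w; apply: Asums_Alim => k; exact: expcvg.
pose f i t := coord X i (L (t *: eps)).
have part1 : forall t, Aexp_eq (t *: eps) (\sum_(i < N) f i t *: eps ^+ i).
  by move=> t; rewrite /f eqL; exact: HL.
exists f; split => //.
  move=> g Hg i t.
  have := Acvg_unique _ _ _ (Hg t) (part1 t).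
  by move=> /(congr1 (coord X i)); rewrite !coordS.
move=> i.
pose c m := coord X i (eps ^+ m) / m`!%:R.
exists c.
have Rs : forall t, Rsums (fun j => c j * t ^+ j) (f i t).
  move=> t; have H := Acvg_coord X i _ _ (HL (t *: eps)).
  rewrite /Rsums.
  have <- : (fun p => coord X i (\sum_(0 <= m < p) (m`!%:R)^-1 *: (t *: eps) ^+ m))
      = (fun p => \sum_(0 <= j < p) c j * t ^+ j).
    apply/funext => p; rewrite linear_sum; apply: eq_bigr => m _.
    by rewrite exprZn !linearZ /= /c; ring.
  exact: H.
split; first exact: Rs.
have [C1 [K1 [C10 K10 H1]]] := coordX_bound X i eps.
have Hc : forall m, `|c m| <= C1 * (K1 ^+ m / m`!%:R).
  move=> m; rewrite /c normrM (@ger0_norm _ (m`!%:R^-1)) ?invr_ge0 ?ler0n //.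
  by rewrite mulrA ler_wpM2r ?invr_ge0 ?ler0n.
pose F (z : A) := Alim (fun p => \sum_(0 <= m < p) (c m)%:A * z ^+ m).
have HF : Aentire_with (fun j => (c j)%:A) F.
  by move=> z; apply: Asums_Alim => k; exact: (entire_cvg c C1 K1 K10 Hc z k).
have HFt : forall t : R, Asums (fun m => (c m)%:A * (t%:A : A) ^+ m) ((f i t)%:A).
  move=> t; rewrite /Asums /Acvg => k.
  rewrite (_ : (fun n => coord _ k _) =
     (fun p => (\sum_(0 <= m < p) c m * t ^+ m) * cB k 1)); last first.
    apply/funext => p /=; rewrite linear_sum mulr_suml; apply: eq_bigr => m _.
    by rewrite algX mulr_algl scalerA linearZ.
  rewrite -/(cB k _) cB_alg.
  by apply: cvgM; [exact: Rs t | exact: cvg_cst].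
have FT : forall t : R, F (t%:A) = (f i t)%:A.
  by move=> t; exact: Acvg_unique _ _ _ (HF (t%:A)) (HFt t).
exists F; split => //.
move=> b g Hg Hgt z.
have hb : b = (fun m => (c m)%:A).
  apply/funext => m; apply: coordB_eq => k.
  pose d m := cB k (b m) - c m * cB k 1.
  have Hd : forall t, (series (fun p => d p * t ^+ p) @ \oo --> 0)%classic.
    move=> t.
    have H1' := Hg (t%:A) k.
    rewrite Hgt in H1'.
    have H2 : ((fun p => (\sum_(0 <= m < p) c m * t ^+ m) * cB k 1) @ \oo --> f i t * cB k 1)%classic.
      by apply: cvgM; [exact: Rs t | exact: cvg_cst].
    have H1c : ((fun n => coord (vbasis fullv) k (\sum_(0 <= m < n) b m * (t%:A : A) ^+ m)) @ \oo --> f i t * cB k 1)%classic.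
      by move: H1'; rewrite -cB_alg.
    have E0 : forall n, series (fun p => d p * t ^+ p) n =
      coord (vbasis fullv) k (\sum_(0 <= m < n) b m * (t%:A : A) ^+ m) -
        (\sum_(0 <= m < n) c m * t ^+ m) * cB k 1.
      move=> n; rewrite /series /= /d.
      rewrite coord_sum mulr_suml -sumrB.
      apply: eq_bigr => q _.
      by rewrite algX mulr_algr /cB coordZ; ring.
    have E : series (fun p => d p * t ^+ p) =
      (fun n => coord (vbasis fullv) k (\sum_(0 <= m < n) b m * (t%:A : A)^+m)) -
      (fun p => (\sum_(0 <= m < p) c m * t ^+ m) * cB k 1).
      by apply/funext => n; rewrite E0.
    rewrite E; have := cvgB H1c H2; rewrite subrr => H3.
    apply: H3.
  have := series_id0 _ _ Hd m.
  by rewrite /d => /eqP; rewrite subr_eq0 => /eqP ->; rewrite cB_alg.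
rewrite hb in Hg.
exact: Acvg_unique _ _ _ (Hg z) (HF z).
Qed.
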